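(* For each $N\ge2$ let $L=\frac{2}{N-1}\sum_{1\le i<j\le N}(Q_{(i,j)}-I)$ act on bounded measurable functions on ${\mathbb T}_N=({\mathbb S}^1)^N$, where each $Q_{(i,j)}$ is a Markov operator acting only through $v_i,v_j$ (so $Q_{(i,j)}\varphi=\varphi$ whenever $\varphi$ depends on neither $v_i$ nor $v_j$). Let $\varphi\in L^\infty$ be a function depending only on $v_1,\dots,v_p$ (for a fixed $p$), regarded as a function on ${\mathbb T}_N$ for every $N\ge p$. Then the power series $e^{tL}\varphi=\sum_{k=0}^\infty\frac{t^k}{k!}L^k\varphi$ converges absolutely in $L^\infty$, uniformly in $N$ and in $t\in[0,T]$, for any $T<1/4$.
   Context: ${\mathbb S}^1$ is the unit circle; a Markov operator is a positive linear operator $Q$ with $Q1=1$, so $\|Q\varphi\|_\infty\le\|\varphi\|_\infty$. *)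

(* Defs.v *)
From HB Require Import structures.
From mathcomp Require Import all_boot all_order all_algebra.
From mathcomp Require Import all_classical all_reals.
From mathcomp Require Import topology normedtype sequences measure lebesgue_measure.
Set Implicit Arguments. Unset Strict Implicit. Unset Printing Implicit Defensive.
Import Order.TTheory GRing.Theory Num.Theory.
Local Open Scope classical_set_scope.
Local Open Scope ring_scope.

Section Torus.
Variable R : realType.

Definition S1 : Type := {z : R * R | z.1 ^+ 2 + z.2 ^+ 2 == 1}.

Lemma S1_base_proof : ((1:R), (0:R)).1 ^+ 2 + ((1:R), (0:R)).2 ^+ 2 == 1.
Proof. by rewrite /= expr1n expr0n addr0. Qed.
Definition S1_base : S1 := exist _ (1, 0) S1_base_proof.

Definition torus (N : nat) : Type := 'I_N -> S1.

(* The sigma-algebra on T_N: the product of the Borel sigma-algebras of the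
   circles, generated by the coordinate maps v |-> (v i).1 and v |-> (v i).2
   (these generate the Borel sets of S^1 ⊂ R^2). *)
Definition cylinders (N : nat) : set (set (torus N)) :=
  [set A | exists (i : 'I_N) (B : set R), measurable B /\
     (A = [set v | B (sval (v i)).1] \/ A = [set v | B (sval (v i)).2])].

Definition meas_fun_TN (N : nat) (f : torus N -> R) : Prop :=
  forall B : set R, measurable B -> smallest (sigma_algebra [set: torus N]) (@cylinders N) (f @^-1` B).

Definition BM (N : nat) (f : torus N -> R) : Prop :=
  meas_fun_TN f /\ exists M : R, forall v, `|f v| <= M.

Definition supnorm (N : nat) (f : torus N -> R) : R :=
  sup [set `|f v| | v in [set: torus N]].

Definition markov_op (N : nat) (Q : (torus N -> R) -> (torus N -> R)) : Prop :=
  [/\ (forall f, BM f -> BM (Q f)),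
      (forall (a b : R) f g, BM f -> BM g ->
          Q (fun v => a * f v + b * g v) = (fun v => a * Q f v + b * Q g v)),
      (forall f, BM f -> (forall v, 0 <= f v) -> forall v, 0 <= Q f v) &
      Q (fun _ => 1) = (fun _ => 1)].

Definition indep_of (N : nat) (i j : 'I_N) (f : torus N -> R) : Prop :=
  forall v w : torus N, (forall k, k != i -> k != j -> v k = w k) -> f v = f w.

Definition upd2 (N : nat) (i j : 'I_N) (v : torus N) (u : S1 * S1) : torus N :=
  fun k => if k == i then u.1 else if k == j then u.2 else v k.

(* Q acts only through (v_i, v_j): (Q f)(v) is determined by (v_i, v_j) and the
   section u |-> f(v[(v_i,v_j) := u]) of f through v; i.e. the other coordinates
   enter only as frozen parameters (as for Q f(v) = \int f(v[(v_i,v_j):=u])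
   q((v_i,v_j),du) with a fixed Markov kernel q on S^1 x S^1). *)
Definition acts_through (N : nat) (i j : 'I_N)
    (Q : (torus N -> R) -> (torus N -> R)) : Prop :=
  forall f g (v w : torus N), BM f -> BM g -> v i = w i -> v j = w j ->
    (forall u, f (upd2 i j v u) = g (upd2 i j w u)) -> Q f v = Q g w.

Definition markov_pair (N : nat) (i j : 'I_N)
    (Q : (torus N -> R) -> (torus N -> R)) : Prop :=
  [/\ markov_op Q, acts_through i j Q &
      (forall f, BM f -> indep_of i j f -> Q f = f)].

Definition genL (N : nat) (Q : 'I_N -> 'I_N -> (torus N -> R) -> (torus N -> R))
    (f : torus N -> R) : torus N -> R :=
  fun v => 2 / (N.-1)%:R *
    \sum_(i < N) \sum_(j < N | (i < j)%N) (Q i j f v - f v).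

Definition extend (p N : nat) (phi : torus p -> R) : torus N -> R :=
  fun v => phi (fun k : 'I_p =>
    match insub (val k) : option 'I_N with Some j => v j | None => S1_base end).

End Torus.

(* Main.v *)
Require Import Defs.
From HB Require Import structures.
From mathcomp Require Import all_boot all_order all_algebra.
From mathcomp Require Import all_classical all_reals.
From mathcomp Require Import topology normedtype sequences measure lebesgue_measure measurable_realfun.
From mathcomp Require Import ring lra.
Import Order.TTheory GRing.Theory Num.Theory.
Local Open Scope classical_set_scope.
Local Open Scope ring_scope.
Set Implicit Arguments. Unset Strict Implicit. Unset Printing Implicit Defensive.

HB.instance Definition _ (R : realType) (N : nat) := gen_eqMixin (torus R N).
HB.instance Definition _ (R : realType) (N : nat) := gen_choiceMixin (torus R N).
HB.instance Definition _ (R : realType) (N : nat) :=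
  isPointed.Build (torus R N) (fun _ => S1_base R).
Definition TT (R : realType) (N : nat) := g_sigma_algebraType (@cylinders R N).

Lemma meas_eq (R : realType) (N : nat) (f : torus R N -> R) :
  meas_fun_TN f <-> measurable_fun [set: TT R N] (f : TT R N -> R).
Proof.
split.
  move=> h _ Y mY; rewrite setTI; exact: h.
move=> h Y mY; have := h measurableT Y mY; rewrite setTI; exact.
Qed.

Lemma BM_lin (R : realType) (N : nat) (a b : R) f g :
  BM f -> BM g -> BM (fun v : torus R N => a * f v + b * g v).
Proof.
move=> [mf [M hM]] [mg [M' hM']]; split.
  apply/meas_eq. apply: measurable_funD; apply: measurable_funM;
    try exact: measurable_cst; exact/meas_eq.
exists (`|a| * M + `|b| * M') => v.
rewrite (le_trans (ler_normD _ _)) // !normrM lerD // ler_wpM2l //.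
Qed.

Lemma BM_cst (R : realType) (N : nat) (c : R) : BM (fun _ : torus R N => c).
Proof.
split; first by apply/meas_eq; exact: measurable_cst.
by exists `|c|.
Qed.

Lemma BM_add (R : realType) (N : nat) (f g : torus R N -> R) :
  BM f -> BM g -> BM (fun v => f v + g v).
Proof.
move=> hf hg; have := BM_lin 1 1 hf hg.
have -> // : (fun v => 1 * f v + 1 * g v) = (fun v => f v + g v).
by apply: funext => v; rewrite !mul1r.
Qed.

Lemma BM_scale (R : realType) (N : nat) (a : R) (f : torus R N -> R) :
  BM f -> BM (fun v => a * f v).
Proof.
move=> hf; have := BM_lin a 0 hf hf.
have -> // : (fun v => a * f v + 0 * f v) = (fun v => a * f v).
by apply: funext => v; rewrite mul0r addr0.
Qed.

Lemma BM_sum (R : realType) (N : nat) (I : Type) (r : seq I) (P : pred I)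
   (h : I -> torus R N -> R) :
  (forall x, P x -> BM (h x)) -> BM (fun v => \sum_(x <- r | P x) h x v).
Proof.
move=> hh; elim: r => [|x r IH].
  have -> : (fun v : torus R N => \sum_(x <- [::] | P x) h x v) = (fun _ => 0).
    by apply: funext => v; rewrite big_nil.
  exact: BM_cst.
case Px: (P x).
  have -> : (fun v => \sum_(y <- x :: r | P y) h y v) =
     (fun v => h x v + \sum_(y <- r | P y) h y v).
    by apply: funext => v; rewrite big_cons Px.
  by apply: BM_add => //; exact: hh.
have -> // : (fun v => \sum_(y <- x :: r | P y) h y v) =
     (fun v => \sum_(y <- r | P y) h y v).
by apply: funext => v; rewrite big_cons Px.
Qed.

Definition projp (R : realType) (p N : nat) (v : torus R N) : torus R p :=
  fun k : 'I_p => match insub (val k) : option 'I_N with Some j => v j | None => S1_base R end.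

Lemma projp_meas (R : realType) (p N : nat) :
  measurable_fun [set: TT R N] (@projp R p N : TT R N -> TT R p).
Proof.
apply: (@measurability _ _ (TT R N) (TT R p) _ _ (@cylinders R p)).
  reflexivity.
move=> _ [A [k [B [mB hA]]] <-].
rewrite setTI /projp.
case: hA => ->; rewrite /preimage /=;
  case E : (insub (val k) : option 'I_N) => [j|].
- by apply: sub_sigma_algebra; exists j, B; split => //; left.
- case: (pselect (B (sval (S1_base R)).1)) => hb.
    rewrite (_ : [set _ | _] = setT); first exact: measurableT.
    by apply/seteqP; split.
  rewrite (_ : [set _ | _] = set0); first exact: measurable0.
  by apply/seteqP; split.
- by apply: sub_sigma_algebra; exists j, B; split => //; right.
- case: (pselect (B (sval (S1_base R)).2)) => hb.
    rewrite (_ : [set _ | _] = setT); first exact: measurableT.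
    by apply/seteqP; split.
  rewrite (_ : [set _ | _] = set0); first exact: measurable0.
  by apply/seteqP; split.
Qed.

Lemma BM_extend (R : realType) (p N : nat) (phi : torus R p -> R) :
  BM phi -> BM (@extend R p N phi).
Proof.
move=> [mphi [M hM]]; split; last by exists M => v; exact: hM.
apply/meas_eq.
have h1 := (meas_eq phi).1 mphi.
have h2 := @projp_meas R p N.
exact: (measurableT_comp h1 h2).
Qed.

Section Ops.
Variable R : realType.
Variable N : nat.
Variable Qs : 'I_N -> 'I_N -> (torus R N -> R) -> (torus R N -> R).
Hypothesis hQ : forall i j : 'I_N, (i < j)%N -> markov_pair i j (Qs i j).

Let L := genL Qs.

Lemma Q_BM (i j : 'I_N) f : (i < j)%N -> BM f -> BM (Qs i j f).
Proof. by move=> /hQ [[h _ _ _] _ _]; exact: h. Qed.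

Lemma Q_lin (i j : 'I_N) (a b : R) f g : (i < j)%N -> BM f -> BM g ->
  Qs i j (fun v => a * f v + b * g v) = (fun v => a * Qs i j f v + b * Qs i j g v).
Proof. by move=> /hQ [[_ h _ _] _ _]; exact: h. Qed.

Lemma Q_bound (i j : 'I_N) f (M : R) : (i < j)%N -> BM f -> (forall v, `|f v| <= M) ->
  forall v, `|Qs i j f v| <= M.
Proof.
move=> ij hf hM v.
have [[_ hlin hpos h1] _ _] := hQ ij.
have e1 := hlin M 1 (fun _ => 1) f (@BM_cst R N 1) hf.
have e2 := hlin M (-1) (fun _ => 1) f (@BM_cst R N 1) hf.
rewrite h1 in e1 e2.
have p1 := hpos _ (BM_lin M 1 (@BM_cst R N 1) hf).
have p2 := hpos _ (BM_lin M (-1) (@BM_cst R N 1) hf).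
rewrite e1 in p1; rewrite e2 in p2.
have : 0 <= M * 1 + 1 * Qs i j f v.
  apply: p1 => w; have := hM w; rewrite ler_norml => /andP[? ?]; lra.
have : 0 <= M * 1 + -1 * Qs i j f v.
  apply: p2 => w; have := hM w; rewrite ler_norml => /andP[? ?]; lra.
move=> ? ?; rewrite ler_norml; apply/andP; split; lra.
Qed.

End Ops.

Lemma BM_sub (R : realType) (N : nat) (f g : torus R N -> R) :
  BM f -> BM g -> BM (fun v => f v - g v).
Proof.
move=> hf hg; have := BM_lin 1 (-1) hf hg.
have -> // : (fun v => 1 * f v + -1 * g v) = (fun v => f v - g v).
by apply: funext => v; rewrite mul1r mulN1r.
Qed.

Section Ops2.
Variable R : realType.
Variable N : nat.
Variable Qs : 'I_N -> 'I_N -> (torus R N -> R) -> (torus R N -> R).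
Hypothesis hQ : forall i j : 'I_N, (i < j)%N -> markov_pair i j (Qs i j).

Lemma L_BM f : BM f -> BM (genL Qs f).
Proof.
move=> hf; apply: BM_scale; apply: BM_sum => i _; apply: BM_sum => j ij.
by apply: BM_sub => //; exact: Q_BM.
Qed.

Lemma L_lin (a b : R) f g : BM f -> BM g ->
  genL Qs (fun v => a * f v + b * g v) = (fun v => a * genL Qs f v + b * genL Qs g v).
Proof.
move=> hf hg; apply: funext => v; rewrite /genL.
rewrite (eq_bigr (fun i : 'I_N => \sum_(j < N | (i < j)%N)
   (a * (Qs i j f v - f v) + b * (Qs i j g v - g v)))); last first.
  move=> i _; apply: eq_bigr => j ij; rewrite (Q_lin hQ) //; ring.
rewrite (eq_bigr (fun i : 'I_N => a * \sum_(j < N | (i < j)%N) (Qs i j f v - f v) +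
    b * \sum_(j < N | (i < j)%N) (Qs i j g v - g v))); last first.
  by move=> i _; rewrite big_split /= !mulr_sumr.
rewrite big_split /= -!mulr_sumr; ring.
Qed.

Lemma iterL_BM k f : BM f -> BM (iter k (genL Qs) f).
Proof. by move=> hf; elim: k => [|k IH] //=; exact: L_BM. Qed.

Lemma iterL_lin k (a b : R) f g : BM f -> BM g ->
  iter k (genL Qs) (fun v => a * f v + b * g v) =
  (fun v => a * iter k (genL Qs) f v + b * iter k (genL Qs) g v).
Proof.
move=> hf hg; elim: k => [|k IH] //=.
by rewrite IH L_lin //; exact: iterL_BM.
Qed.

Lemma iterL_sum k (I : Type) (r : seq I) (P : pred I) (h : I -> torus R N -> R) :
  (forall x, P x -> BM (h x)) ->
  iter k (genL Qs) (fun v => \sum_(x <- r | P x) h x v) =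
  (fun v => \sum_(x <- r | P x) iter k (genL Qs) (h x) v).
Proof.
move=> hh; elim: r => [|x r IH].
  have -> : (fun v : torus R N => \sum_(x <- [::] | P x) h x v) =
     (fun v => 0 * 0 + 0 * 0).
    by apply: funext => v; rewrite big_nil !mul0r addr0.
  rewrite (iterL_lin k 0 0 (@BM_cst R N 0) (@BM_cst R N 0)).
  by apply: funext => v; rewrite big_nil !mul0r addr0.
case Px: (P x).
  have -> : (fun v => \sum_(y <- x :: r | P y) h y v) =
     (fun v => 1 * h x v + 1 * \sum_(y <- r | P y) h y v).
    by apply: funext => v; rewrite big_cons Px !mul1r.
  rewrite iterL_lin; first 1 last.
  - exact: hh.
  - exact: BM_sum.
  rewrite IH; apply: funext => v; by rewrite big_cons Px !mul1r.
have -> : (fun v => \sum_(y <- x :: r | P y) h y v) =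
     (fun v => \sum_(y <- r | P y) h y v).
  by apply: funext => v; rewrite big_cons Px.
by rewrite IH; apply: funext => v; rewrite big_cons Px.
Qed.

End Ops2.

Lemma count_pairs (N : nat) (S : {set 'I_N}) :
  (\sum_(i < N) \sum_(j < N | (i < j)%N) ((i \in S) + (j \in S)) = #|S| * N.-1)%N.
Proof.
have e1 : forall x : 'I_N, (\sum_(y < N) ((x < y)%N + (y < x)%N) = N.-1)%N.
  move=> x; rewrite (eq_bigr (fun y : 'I_N => nat_of_bool (y != x))); last first.
    by move=> y _; rewrite neq_ltn orbC; case: ltngtP.
  rewrite (bigD1 x) //= eqxx add0n.
  rewrite (eq_bigr (fun _ => 1%N)); last by move=> y ->.
  by rewrite sum1_card cardC1 card_ord.
rewrite (eq_bigr (fun i : 'I_N => \sum_(j < N) ((i < j)%N * (i \in S) + (i < j)%N * (j \in S))%N)); last first.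
  by move=> i _; rewrite big_mkcond /=; apply: eq_bigr => j _; case: ifP => _; rewrite ?mul1n ?mul0n.
rewrite (eq_bigr (fun i : 'I_N => \sum_(j < N) ((i < j)%N * (i \in S)) + \sum_(j < N) ((i < j)%N * (j \in S)))%N); last by move=> i _; rewrite big_split.
rewrite big_split /= [X in (_ + X)%N]exchange_big /= -big_split /=.
rewrite (eq_bigr (fun x : 'I_N => (x \in S) * N.-1)%N); last first.
  move=> x _; rewrite -(e1 x) big_distrr /= -big_split /=; apply: eq_bigr => y _.
  by rewrite mulnDr mulnC [((y < x)%N * _)%N]mulnC.
rewrite -big_distrl /=; congr (_ * _)%N.
rewrite -sum1_card [in RHS]big_mkcond /=; apply: eq_bigr => i _; by case: (i \in S).
Qed.

Definition dep (R : realType) (N : nat) (S : {set 'I_N}) (f : torus R N -> R) :=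
  forall v w : torus R N, (forall k, k \in S -> v k = w k) -> f v = f w.

Lemma dep_sub (R : realType) (N : nat) (S S' : {set 'I_N}) (f : torus R N -> R) :
  S \subset S' -> dep S f -> dep S' f.
Proof. by move=> /fintype.subsetP sS hd v w h; apply: hd => k kS; apply: h; apply: sS. Qed.

Definition bnd (R : realType) (k m : nat) : R := 4 ^+ k * (k`!)%:R * ('C(m + k, k))%:R.

Lemma bnd_ge0 (R : realType) k m : 0 <= bnd R k m.
Proof. by rewrite /bnd !mulr_ge0 // exprn_ge0. Qed.

Lemma bnd_step (R : realType) k m : 4 * m%:R * bnd R k m.+1 <= bnd R k.+1 m.
Proof.
rewrite /bnd exprS factS.
have h : (m * (k`! * 'C(m.+1 + k, k)) <= (k.+1 * k`!) * 'C(m + k.+1, k.+1))%N.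
  rewrite addnS -addSn [(k.+1 * _)%N]mulnC -mulnA mul_bin_left addnK.
  by rewrite mulnCA leq_mul // leq_mul // leqnSn.
have : (m * (k`! * 'C(m.+1 + k, k)))%:R <= ((k.+1 * k`!) * 'C(m + k.+1, k.+1))%:R :> R
  by rewrite ler_nat.
rewrite !natrM => h'.
have -> : 4 * m%:R * (4 ^+ k * k`!%:R * 'C(m.+1 + k, k)%:R) =
   (4 * 4 ^+ k) * (m%:R * (k`!%:R * 'C(m.+1 + k, k)%:R)) :> R by ring.
have -> : 4 * 4 ^+ k * (k.+1%:R * k`!%:R) * 'C(m + k.+1, k.+1)%:R =
   (4 * 4 ^+ k) * (k.+1%:R * k`!%:R * 'C(m + k.+1, k.+1)%:R) :> R by ring.
by rewrite ler_wpM2l // mulr_ge0 // exprn_ge0.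
Qed.

Section Ops3.
Variable R : realType.
Variable N : nat.
Variable Qs : 'I_N -> 'I_N -> (torus R N -> R) -> (torus R N -> R).
Hypothesis hQ : forall i j : 'I_N, (i < j)%N -> markov_pair i j (Qs i j).
Hypothesis hN : (2 <= N)%N.

Lemma Q_dep (i j : 'I_N) S f : (i < j)%N -> BM f -> dep S f ->
  dep (i |: (j |: S)) (Qs i j f).
Proof.
move=> ij hf hd v w h.
have [_ hat _] := hQ ij.
apply: hat => //; first by apply: h; rewrite !inE eqxx.
  by apply: h; rewrite !inE eqxx orbT.
move=> u; apply: hd => k kS; rewrite /upd2.
case: ifP => // _; case: ifP => // _; apply: h; by rewrite !inE kS !orbT.
Qed.

Lemma Q_id (i j : 'I_N) S f : (i < j)%N -> BM f -> dep S f ->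
  i \notin S -> j \notin S -> Qs i j f = f.
Proof.
move=> ij hf hd iS jS; have [_ _ hid] := hQ ij.
apply: hid => // v w h; apply: hd => k kS; apply: h.
  by apply: contraNneq iS => <-.
by apply: contraNneq jS => <-.
Qed.

Lemma main_bound k : forall m S f (M : R), BM f -> dep S f -> (#|S| <= m)%N ->
  (forall v, `|f v| <= M) -> forall v, `|iter k (genL Qs) f v| <= bnd R k m * M.
Proof.
elim: k => [|k IH] m S f M hf hd hS hM v.
  by rewrite /bnd /= expr0 bin0 !mul1r.
have M0 : 0 <= M by apply: le_trans (hM v).
set c : R := 2 / (N.-1)%:R.
have c0 : 0 <= c by rewrite /c divr_ge0.
have cN : c * (N.-1)%:R = 2.
  rewrite /c mulfVK // pnatr_eq0; by case: N hN => [|[|n]].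
set D := fun (i j : 'I_N) (w : torus R N) => c * (Qs i j f w - f w).
have DBM : forall i j : 'I_N, (i < j)%N -> BM (D i j).
  by move=> i j ij; apply: BM_scale; apply: BM_sub => //; exact: Q_BM.
have eL : genL Qs f = fun w => \sum_(i < N) \sum_(j < N | (i < j)%N) D i j w.
  apply: funext => w; rewrite /genL mulr_sumr; apply: eq_bigr => i _.
  by rewrite mulr_sumr.
rewrite iterSr eL iterL_sum //; last first.
  by move=> i _; apply: BM_sum => j ij; exact: DBM.
rewrite /= (eq_bigr (fun i : 'I_N => \sum_(j < N | (i < j)%N) iter k (genL Qs) (D i j) v)); last first.
  by move=> i _; rewrite iterL_sum // => j ij; exact: DBM.
set C := bnd R k m.+1 * (c * (M + M)).
have C0 : 0 <= C by rewrite /C mulr_ge0 ?bnd_ge0 // mulr_ge0 // addr_ge0.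
have term : forall i j : 'I_N, (i < j)%N ->
    `|iter k (genL Qs) (D i j) v| <= C * ((i \in S)%:R + (j \in S)%:R).
  move=> i j ij.
  have DB : forall w, `|D i j w| <= c * (M + M).
    move=> w; rewrite /D normrM ger0_norm // ler_wpM2l //.
    apply: (le_trans (ler_normB _ _)); apply: lerD; last exact: hM.
    exact: (Q_bound hQ ij hf hM).
  have Ddep : forall S' : {set 'I_N}, S \subset S' -> i |: (j |: S) \subset S' -> dep S' (D i j).
    move=> S' s1 s2 x y hxy; rewrite /D.
    rewrite (dep_sub s2 (Q_dep ij hf hd) hxy) (dep_sub s1 hd hxy) //.
  case: (boolP (i \in S)) => iS.
    have := IH m.+1 (j |: S) (D i j) (c * (M + M)) (DBM _ _ ij).
    move=> /(_ _ _ DB v) H; rewrite (le_trans (H _ _)) //.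
    - apply: Ddep; first exact: finset.subsetUr.
      by rewrite !finset.subUset !finset.sub1set !inE ?finset.subsetUr ?iS ?eqxx ?orbT.
    - by rewrite cardsU1; exact: (leq_add (leq_b1 _) hS).
    - by rewrite -[X in X <= _]mulr1 ler_wpM2l // lerDl.
  case: (boolP (j \in S)) => jS.
    have := IH m.+1 (i |: S) (D i j) (c * (M + M)) (DBM _ _ ij).
    move=> /(_ _ _ DB v) H; rewrite (le_trans (H _ _)) //.
    - apply: Ddep; first exact: finset.subsetUr.
      by rewrite !finset.subUset !finset.sub1set !inE ?finset.subsetUr ?jS ?eqxx ?orbT.
    - by rewrite cardsU1; exact: (leq_add (leq_b1 _) hS).
    - by rewrite -[X in X <= _]mulr1 ler_wpM2l // lerDr.
  have -> : D i j = fun w => 0 * f w + 0 * f w.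
    apply: funext => w; rewrite /D (Q_id ij hf hd iS jS) subrr mulr0 !mul0r.
    by rewrite addr0.
  by rewrite iterL_lin // !mul0r addr0 normr0 mulr_ge0 // addr_ge0.
apply: (le_trans (ler_norm_sum _ _ _)).
apply: (le_trans (y := \sum_(i < N) \sum_(j < N | (i < j)%N) (C * ((i \in S)%:R + (j \in S)%:R)))).
  apply: ler_sum => i _; apply: (le_trans (ler_norm_sum _ _ _)).
  by apply: ler_sum => j ij; exact: term.
rewrite (eq_bigr (fun i : 'I_N => C * \sum_(j < N | (i < j)%N) ((i \in S) + (j \in S))%N%:R)); last first.
  by move=> i _; rewrite mulr_sumr; apply: eq_bigr => j _; rewrite natrD.
rewrite -mulr_sumr.
rewrite (eq_bigr (fun i : 'I_N => (\sum_(j < N | (i < j)%N) ((i \in S) + (j \in S))%N)%:R)); last by move=> i _; rewrite natr_sum.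
rewrite -natr_sum count_pairs natrM.
have -> : C * (#|S|%:R * (N.-1)%:R) = 4 * #|S|%:R * bnd R k m.+1 * M.
  transitivity (2 * #|S|%:R * bnd R k m.+1 * M * (c * (N.-1)%:R)); first by rewrite /C; ring.
  by rewrite cN; ring.
rewrite ler_wpM2r // (le_trans _ (bnd_step R k m)) // ler_wpM2r ?bnd_ge0 //.
by rewrite ler_wpM2l // ler_nat.
Qed.

End Ops3.
Lemma small_pow (R : realType) (r d : R) : 0 <= r < 1 -> 0 < d -> exists n : nat, r ^+ n < d.
Proof.
move=> /andP[r0 r1] d0.
have h : `|r| < 1 by rewrite ger0_norm.
have := (cvgr0_norm_lt (F := \oo) (fun n : nat => r ^+ n) (cvg_expr h) _ d0).
move=> [n0 _ Hn]; exists n0; have := Hn n0 (leqnn _) => /=.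
by rewrite ger0_norm // exprn_ge0.
Qed.

Lemma binom_bound (R : realType) (s : R) n k : 0 <= s -> (k <= n)%N ->
  ('C(n, k))%:R * s ^+ k <= (1 + s) ^+ n.
Proof.
move=> s0 kn; rewrite addrC exprD1n.
have kn1 : (k < n.+1)%N by [].
rewrite (bigD1 (Ordinal kn1)) //= mulr_natl lerDl.
by apply: sumr_ge0 => i _; rewrite mulrn_wge0 // exprn_ge0.
Qed.

Lemma geom_tail (R : realType) (r : R) a b : 0 <= r < 1 ->
  \sum_(a <= k < b) r ^+ k <= r ^+ a / (1 - r).
Proof.
move=> /andP[r0 r1]; have r1' : 0 < 1 - r by rewrite subr_gt0.
case: (leqP b a) => ab.
  by rewrite big_geq // divr_ge0 // ?exprn_ge0 // ltW.
have [d ->] : exists d, b = (a + d)%N by exists (b - a)%N; rewrite subnKC // ltnW.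
have e : \sum_(a <= k < a + d) r ^+ k = (r ^+ a - r ^+ (a + d)) / (1 - r).
  elim: d => [|d IH]; first by rewrite addn0 big_geq // subrr mul0r.
  rewrite addnS big_nat_recr /= ?leq_addr // IH.
  apply: (mulIf (lt0r_neq0 r1')) => /=.
  rewrite mulrDl !divfK ?lt0r_neq0 // exprS exprD; ring.
rewrite e; apply: ler_wpM2r; first by rewrite invr_ge0 ltW.
by rewrite gerBl exprn_ge0.
Qed.

Theorem mainTheorem4 (R : realType) (p : nat) (phi : torus R p -> R)
    (Q : forall N : nat, 'I_N -> 'I_N -> (torus R N -> R) -> (torus R N -> R))
    (T : R) :
  BM phi ->
  (forall (N : nat) (i j : 'I_N), (2 <= N)%N -> (i < j)%N ->
      markov_pair i j (Q N i j)) ->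
  T < 1 / 4 ->
  forall eps : R, 0 < eps ->
  exists K0 : nat, forall N : nat, (2 <= N)%N -> (p <= N)%N ->
    forall t : R, 0 <= t <= T -> forall K : nat,
      \sum_(K0 <= k < K)
         t ^+ k / (k`!)%:R * supnorm (iter k (genL (Q N)) (@extend R p N phi))
      <= eps.
Proof.
move=> hphi hQ hT eps heps.
have [_ [M0 hM0]] := hphi.
set M := `|M0|.
have M0' : 0 <= M by rewrite normr_ge0.
have hM : forall v, `|phi v| <= M by move=> v; rewrite (le_trans (hM0 v)) // ler_norm.
case: (ltP T 0) => T0.
  exists 0%N => N _ _ t /andP[t0 tT]; lra.
set q := 4 * T.
have q0 : 0 <= q by rewrite /q mulr_ge0.
have q1 : q < 1 by rewrite /q; lra.
set s := 2 / (1 - q).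
have s0 : 0 < s by rewrite /s divr_gt0 // subr_gt0.
set r := (1 + q) / 2.
have s0' : 0 <= s by exact: ltW.
have r0 : 0 <= r by rewrite /r divr_ge0 // addr_ge0.
have r1 : r < 1 by rewrite /r; lra.
have qsr : q * (1 + s) / s <= r.
  have h1q : 1 - q != 0 by rewrite lt0r_neq0 // subr_gt0.
  have -> : q * (1 + s) / s = q * ((1 - q) / 2) + q.
    rewrite /s; field; rewrite h1q //=.
  rewrite /r; nra.
set A := M * (1 + s) ^+ p.
have A0 : 0 <= A by rewrite /A mulr_ge0 // exprn_ge0 // addr_ge0 // ltW.
have [K0 hK0] : exists n : nat, r ^+ n < eps * (1 - r) / (A + 1).
  apply: small_pow; first by rewrite r0 r1.
  by rewrite divr_gt0 ?mulr_gt0 ?subr_gt0 // ltr_wpDl.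
exists K0 => N hN hpN t /andP[t0 tT] K.
have term : forall k, t ^+ k / (k`!)%:R *
     supnorm (iter k (genL (Q N)) (@extend R p N phi)) <= A * r ^+ k.
  set f0 := @extend R p N phi.
  set S0 : {set 'I_N} := [set widen_ord hpN k | k : 'I_p].
  have hS0 : (#|S0| <= p)%N by rewrite (leq_trans (leq_imset_card _ _)) // card_ord.
  have hd : dep S0 f0.
    move=> v w h; rewrite /f0 /extend; congr phi; apply: funext => k.
    case: insubP => [j _ hj|] //; apply: h.
    have -> : j = widen_ord hpN k by apply: val_inj.
    by rewrite imset_f.
  have hf0 : BM f0 := BM_extend N hphi.
  have hb0 : forall v, `|f0 v| <= M by move=> v; exact: hM.
  have hQN : forall i j : 'I_N, (i < j)%N -> markov_pair i j (Q N i j).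
    by move=> i j; exact: hQ N i j hN.
  move=> k.
  have sle : supnorm (iter k (genL (Q N)) f0) <= bnd R k p * M.
    apply: ge_sup.
      by exists (`|iter k (genL (Q N)) f0 (fun _ => S1_base R)|); exists (fun _ => S1_base R).
    move=> y [v _ <-]; exact: (main_bound hQN hN k hf0 hd hS0 hb0 v).
  have tk0 : 0 <= t ^+ k / (k`!)%:R by rewrite divr_ge0 ?exprn_ge0.
  apply: (le_trans (ler_wpM2l tk0 sle)).
  have kf : (k`!)%:R != 0 :> R by rewrite pnatr_eq0 -lt0n fact_gt0.
  have -> : t ^+ k / (k`!)%:R * (bnd R k p * M) = (4 * t) ^+ k * ('C(p + k, k))%:R * M.
    rewrite /bnd exprMn; field; exact: kf.
  have h4t : (4 * t) ^+ k <= q ^+ k.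
    by apply: lerXn2r; rewrite ?nnegrE ?mulr_ge0 // /q; lra.
  have Cq : ('C(p + k, k))%:R * q ^+ k <= (1 + s) ^+ p * r ^+ k.
    have e1 : q ^+ k = s ^+ k * (q / s) ^+ k.
      by rewrite -exprMn mulrC divfK // lt0r_neq0.
    have qs0 : 0 <= q / s by rewrite divr_ge0 // ltW.
    rewrite e1 mulrA (le_trans (ler_wpM2r (exprn_ge0 _ qs0) (@binom_bound R s (p + k) k s0' (leq_addl p k)))) //.
    rewrite exprD -mulrA -exprMn; apply: ler_wpM2l; first by rewrite exprn_ge0 // addr_ge0.
    apply: lerXn2r; first by rewrite nnegrE mulr_ge0 // addr_ge0.
      by rewrite nnegrE.
    have -> : (1 + s) * (q / s) = q * (1 + s) / s by ring.
    exact: qsr.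
  apply: (le_trans (y := q ^+ k * ('C(p + k, k))%:R * M)).
    by rewrite ler_wpM2r // ler_wpM2r.
  rewrite [q ^+ k * _]mulrC (le_trans (ler_wpM2r M0' Cq)) //.
  by rewrite /A le_eqVlt; apply/orP; left; apply/eqP; ring.
apply: (le_trans (ler_sum _ (fun k _ => term k))).
rewrite -mulr_sumr.
apply: (le_trans (ler_wpM2l A0 (geom_tail K0 K _))); first by rewrite r0 r1.
have x0 : 0 <= r ^+ K0 by rewrite exprn_ge0.
have h1r : 0 < 1 - r by rewrite subr_gt0.
move: hK0; rewrite ltr_pdivlMr ?ltr_wpDl // => hK0.
rewrite mulrA ler_pdivrMr //; nra.
Qed.
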